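(* Consider a finite tabular MDP with a unique optimal policy $\pi^*$ in which $d_\rho^\pi(s)\ge d_{\min}>0$ for all states $s$ and all full-support policies $\pi$. Let $\pi_t$ be generated by the discrete EG update $\pi_{t+1}(a|s)=\pi_t(a|s)e^{\eta[U^t_a(s)]_+}/Z^t_s$ with a sufficiently small constant step size $\eta>0$ (as required for $\pi_t\to\pi^*$). Then $\delta_t:=V^*-V(\pi_t)$ satisfies $\delta_t=O(1/t)$.
   Context: A finite MDP $(\mathcal S,\mathcal A,P,r,\gamma,\rho)$ with $r(s,a)\in[0,1]$, $\gamma\in[0,1)$; tabular softmax policies $\pi_\theta(a|s)=e^{\theta(s,a)}/\sum_{a'}e^{\theta(s,a')}$. $V^\pi,Q^\pi$ are the discounted state- and action-value functions, $V(\pi)=\mathbb{E}_{s\sim\rho}V^\pi(s)$, $V^*=V(\pi^* )$, $d_\rho^\pi(s)=(1-\gamma)\sum_{t\ge0}\gamma^t\Pr(s_t=s\mid\rho,\pi)$. $U^t_a(s):=Q^{\pi_t}(s,a)-V^{\pi_t}(s)$, $[x]_+=\max(x,0)$, $Z^t_s:=\sum_{a'}\pi_t(a'|s)e^{\eta[U^t_{a'}(s)]_+}$. *)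

(* Defs.v *)
From HB Require Import structures.
From mathcomp Require Import all_boot all_order all_algebra.
From mathcomp Require Import all_classical all_reals all_analysis.
Set Implicit Arguments. Unset Strict Implicit. Unset Printing Implicit Defensive.
Import Order.TTheory GRing.Theory Num.Theory.
Local Open Scope ring_scope.

Section MDP.
Variables (R : realType) (S A : finType).
(* transition kernel P s a s' = P(s'|s,a), reward r, discount gamma *)
Variables (P : S -> A -> S -> R) (r : S -> A -> R) (gamma : R).

Definition rseries (u : nat -> R) : R := limn (fun n => \sum_(0 <= t < n) u t).

(* a (stochastic, tabular) policy: pi s a = pi(a|s) *)
Definition policy := S -> A -> R.

Definition is_policy (pi : policy) : Prop :=
  forall s, (forall a, 0 <= pi s a) /\ \sum_a pi s a = 1.

Definition full_support (pi : policy) : Prop :=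
  is_policy pi /\ forall s a, 0 < pi s a.

Definition softmax (theta : S -> A -> R) : policy :=
  fun s a => expR (theta s a) / \sum_a' expR (theta s a').

Fixpoint state_dist (pi : policy) (mu : S -> R) (t : nat) : S -> R :=
  match t with
  | 0 => mu
  | t'.+1 => fun s' => \sum_s state_dist pi mu t' s * \sum_a pi s a * P s a s'
  end.

Definition dirac (s : S) : S -> R := fun s' => (s' == s)%:R.

Definition Vf (pi : policy) (s : S) : R :=
  rseries (fun t => gamma ^+ t *
     \sum_s' state_dist pi (dirac s) t s' * \sum_a pi s' a * r s' a).

Definition Qf (pi : policy) (s : S) (a : A) : R :=
  r s a + gamma * \sum_s' P s a s' * Vf pi s'.

Definition Vrho (rho : S -> R) (pi : policy) : R := \sum_s rho s * Vf pi s.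

Definition dvisit (rho : S -> R) (pi : policy) (s : S) : R :=
  (1 - gamma) * rseries (fun t => gamma ^+ t * state_dist pi rho t s).

Definition Uf (pi : policy) (s : S) (a : A) : R := Qf pi s a - Vf pi s.

Definition optimal (pis : policy) : Prop :=
  is_policy pis /\ forall pi, is_policy pi -> forall s, Vf pi s <= Vf pis s.

Definition eg_step (eta : R) (pi : policy) : policy :=
  fun s a => pi s a * expR (eta * Num.max (Uf pi s a) 0) /
             \sum_a' pi s a' * expR (eta * Num.max (Uf pi s a') 0).

Definition eg_iter (eta : R) (pi0 : policy) (t : nat) : policy :=
  iter t (eg_step eta) pi0.

End MDP.

(* Main.v *)
Require Import Defs.
From HB Require Import structures.
From mathcomp Require Import all_boot all_order all_algebra.
From mathcomp Require Import all_classical all_reals all_analysis.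
From mathcomp Require Import ring lra zify.
Import Order.TTheory GRing.Theory Num.Theory numFieldNormedType.Exports.
Set Implicit Arguments. Unset Strict Implicit. Unset Printing Implicit Defensive.
Local Open Scope ring_scope.
Local Open Scope classical_set_scope.
Section Aux.
Variable R : realType.

Lemma geo_sum (g : R) n : (1 - g) * \sum_(0 <= t < n) g ^+ t = 1 - g ^+ n.
Proof.
elim: n => [|n IH]; first by rewrite big_geq // mulr0 expr0 subrr.
rewrite big_nat_recr //= mulrDr IH exprSr; ring.
Qed.

Lemma geo_le (g : R) n : 0 <= g < 1 -> \sum_(0 <= t < n) g ^+ t <= (1 - g)^-1.
Proof.
move=> /andP[g0 g1].
have h1 : 0 < 1 - g by rewrite subr_gt0.
rewrite -(ler_pM2l h1) geo_sum mulfV ?gt_eqF // lerBlDr lerDl.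
exact: exprn_ge0.
Qed.

Lemma ps_cvg (u : nat -> R) (B : R) : (forall t, 0 <= u t) ->
  (forall n, \sum_(0 <= t < n) u t <= B) -> cvgn (fun n => \sum_(0 <= t < n) u t).
Proof.
move=> u0 uB; apply: cvgP; apply: nondecreasing_cvgn.
- move=> m n mn /=; rewrite (big_cat_nat (leq0n m) mn) /= lerDl.
  by apply: sumr_ge0 => i _.
- by exists B => _ [n _ <-].
Qed.

Lemma cvg_sumF (I : finType) (f : I -> nat -> R) (l : I -> R) :
  (forall i, f i @ \oo --> l i) ->
  (fun n => \sum_i f i n) @ \oo --> \sum_i l i.
Proof.
move=> H; apply: cvg_big => //; exact: add_continuous.
Qed.

Lemma fin_argmax (I : finType) (f : I -> R) (i0 : I) : exists j, forall i, f i <= f j.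
Proof.
case: (@arg_maxP _ _ I i0 predT f isT) => j _ H.
by exists j => i; exact: H.
Qed.

Lemma fin_pos_min (I : finType) (f : I -> R) :
  (forall i, 0 < f i) -> exists p, 0 < p /\ forall i, p <= f i.
Proof.
move=> fpos; case: (pickP (@predT I)) => [i0 _|h].
- have [j Hj] := fin_argmax (fun i => - f i) i0.
  exists (f j); split => // i; by have := Hj i; rewrite lerN2.
- by exists 1; split => // i; have := h i.
Qed.

Lemma max_principle (S : finType) (k : S -> S -> R) (W : S -> R) (g m : R) :
  0 <= g < 1 -> (forall s s', 0 <= k s s') -> (forall s, \sum_s' k s s' = 1) ->
  (forall s, W s <= m + g * \sum_s' k s s' * W s') -> forall s, (1 - g) * W s <= m.
Proof.
move=> /andP[g0 g1] k0 k1 H s.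
have [j Hj] := fin_argmax W s.
have h : W j <= m + g * W j.
  apply: (le_trans (H j)); rewrite lerD2l ler_wpM2l //.
  rewrite -[X in _ <= X]mul1r -(k1 j) mulr_suml; apply: ler_sum => s' _.
  by apply: ler_wpM2l.
have h1 : 0 <= 1 - g by rewrite subr_ge0 ltW.
apply: (le_trans (ler_wpM2l h1 (Hj s))); lra.
Qed.

End Aux.
Section Rate.
Variable R : realType.

Lemma rec_step (x x' m k : R) : 0 <= x -> 0 <= x' -> 0 <= m -> 0 < k ->
  x * (m * k) <= 1 -> x' <= x - k * x ^+ 2 -> x' * ((m + 1) * k) <= 1.
Proof.
move=> x0 x'0 m0 k0 h1 h2.
have mk0 : 0 <= (m + 1) * k by apply: mulr_ge0; [lra | exact: ltW].
apply: le_trans (ler_wpM2r mk0 h2) _.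
pose y := k * x.
have y0 : 0 <= y by apply: mulr_ge0 => //; exact: ltW.
have e : (x - k * x ^+ 2) * ((m + 1) * k) = (m + 1) * (y - y ^+ 2).
  by rewrite /y; ring.
have hy : m * y <= 1 by move: h1; rewrite /y; have -> : x * (m * k) = m * (k * x) by ring.
rewrite e.
have [yl|yg] := leP y 1.
  have h3 : (m * y) * (1 - y) <= 1 * (1 - y) by apply: ler_wpM2r => //; lra.
  have e2 : (m + 1) * (y - y ^+ 2) = (m * y) * (1 - y) + y * (1 - y) by ring.
  rewrite e2; nra.
have : y - y ^+ 2 <= 0 by rewrite expr2; nra.
nra.
Qed.

Lemma rec_rate (d : nat -> R) (k B : R) (T : nat) : 0 < k ->
  (forall t, 0 <= d t) -> (forall t, d t <= B) ->
  (forall t, (T <= t)%N -> d t.+1 <= d t - k * d t ^+ 2) ->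
  exists C, forall t, (0 < t)%N -> d t <= C / t%:R.
Proof.
move=> k0 d0 dB H.
have claim : forall n, d (T + n)%N * (n%:R * k) <= 1.
  elim => [|n IH]; first by rewrite mul0r mulr0 ler01.
  rewrite addnS -natr1.
  apply: (@rec_step (d (T + n)%N)); [exact: d0 | exact: d0 | exact: ler0n | exact: k0 | exact: IH | ].
  by apply: H; exact: leq_addr.
have B0 : 0 <= B by apply: le_trans (d0 0%N) (dB 0%N).
exists ((2 * T)%:R * B + 2 / k) => t t0.
have tpos : 0 < t%:R :> R by rewrite ltr0n.
rewrite ler_pdivlMr //.
have c0 : 0 <= 2 / k by apply: divr_ge0 => //; exact: ltW.
have [tle|tgt] := leqP t (2 * T).
  have h1 : d t * t%:R <= B * t%:R by apply: ler_wpM2r; [exact: ltW | exact: dB].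
  have h2 : B * t%:R <= B * (2 * T)%:R by apply: ler_wpM2l => //; rewrite ler_nat.
  have e : B * (2 * T)%:R = (2 * T)%:R * B by rewrite mulrC.
  lra.
pose n := (t - T)%N.
have tn : t = (T + n)%N by rewrite /n subnKC //; apply: leq_trans (ltnW tgt); rewrite leq_pmull.
have tn2 : (t <= 2 * n)%N by rewrite /n; lia.
have h := claim n; rewrite -tn in h.
have h1 : d t * t%:R <= d t * (2 * n)%:R by apply: ler_wpM2l => //; rewrite ler_nat.
have e : d t * (2 * n)%:R = (2 / k) * (d t * (n%:R * k)).
  by rewrite natrM; field; rewrite gt_eqF.
have h3 : (2 / k) * (d t * (n%:R * k)) <= 2 / k * 1 by apply: ler_wpM2l.
have h4 : 0 <= (2 * T)%:R * B by apply: mulr_ge0 => //; exact: ler0n.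
lra.
Qed.
End Rate.
Section MDP.
Variables (R : realType) (S A : finType) (P : S -> A -> S -> R) (r : S -> A -> R) (gamma : R).
Hypothesis P0 : forall s a s', 0 <= P s a s'.
Hypothesis P1 : forall s a, \sum_s' P s a s' = 1.
Hypothesis r01 : forall s a, 0 <= r s a <= 1.
Hypothesis g01 : 0 <= gamma < 1.

Local Notation V := (Vf P r gamma).
Local Notation Q := (Qf P r gamma).
Local Notation sd := (state_dist P).

Definition kern (pi : policy R S A) s s' := \sum_a pi s a * P s a s'.
Definition rpi (pi : policy R S A) s := \sum_a pi s a * r s a.

Lemma kern_ge0 pi : is_policy pi -> forall s s', 0 <= kern pi s s'.
Proof.
move=> hp s s'; apply: sumr_ge0 => a _; apply: mulr_ge0 => //.
by case: (hp s).
Qed.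

Lemma kern_sum1 pi : is_policy pi -> forall s, \sum_s' kern pi s s' = 1.
Proof.
move=> hp s; rewrite /kern exchange_big /=.
rewrite -[RHS](proj2 (hp s)); apply: eq_bigr => a _.
by rewrite -mulr_sumr P1 mulr1.
Qed.

Lemma rpi_ge0 pi s : is_policy pi -> 0 <= rpi pi s.
Proof.
move=> hp; apply: sumr_ge0 => a _; apply: mulr_ge0; first by case: (hp s).
by case/andP: (r01 s a).
Qed.

Lemma rpi_le1 pi s : is_policy pi -> rpi pi s <= 1.
Proof.
move=> hp; rewrite -(proj2 (hp s)); apply: ler_sum => a _.
rewrite -[X in _ <= X]mulr1; apply: ler_wpM2l; first by case: (hp s).
by case/andP: (r01 s a).
Qed.

Lemma sd_ge0 pi mu : is_policy pi -> (forall s, 0 <= mu s) -> forall t s, 0 <= sd pi mu t s.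
Proof.
move=> hp mu0; elim => [|t IH] s //=.
apply: sumr_ge0 => s0 _; apply: mulr_ge0 => //.
exact: (kern_ge0 hp).
Qed.

Lemma sd_sum pi mu : is_policy pi -> forall t, \sum_s sd pi mu t s = \sum_s mu s.
Proof.
move=> hp; elim => [|t IH] //=.
rewrite exchange_big /= -IH; apply: eq_bigr => s _.
by rewrite -mulr_sumr (kern_sum1 hp) mulr1.
Qed.

Lemma sd_shift pi mu t s' :
  sd pi mu t.+1 s' = sd pi (fun s1 => \sum_s mu s * kern pi s s1) t s'.
Proof.
elim: t s' => [|t IH] s' //.
transitivity (\sum_s sd pi mu t.+1 s * kern pi s s') => //.
transitivity (\sum_s sd pi (fun s1 => \sum_s mu s * kern pi s s1) t s * kern pi s s') => //.
by apply: eq_bigr => s _; rewrite IH.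
Qed.

Lemma sd_lin pi mu t s' : sd pi mu t s' = \sum_s mu s * sd pi (@Defs.dirac R S s) t s'.
Proof.
elim: t s' => [|t IH] s' /=.
  rewrite /Defs.dirac (bigD1 s') //= eqxx mulr1 big1 ?addr0 // => s /negbTE.
  by rewrite eq_sym => ->; rewrite mulr0.
under eq_bigr do rewrite IH mulr_suml.
rewrite exchange_big /=; apply: eq_bigr => s _.
rewrite mulr_sumr; apply: eq_bigr => s1 _; by rewrite mulrA.
Qed.

Lemma dirac_sum s : \sum_s' (@Defs.dirac R S s) s' = 1.
Proof.
rewrite /Defs.dirac (bigD1 s) //= eqxx big1 ?addr0 // => s' /negbTE -> //.
Qed.

Lemma dirac_dot (f : S -> R) s : \sum_s' (@Defs.dirac R S s) s' * f s' = f s.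
Proof.
rewrite /Defs.dirac (bigD1 s) //= eqxx mul1r big1 ?addr0 // => s' /negbTE ->.
by rewrite mul0r.
Qed.

Lemma dirac_dot' (f : S -> R) s : \sum_s' (@Defs.dirac R S s') s * f s' = f s.
Proof.
rewrite /Defs.dirac (bigD1 s) //= eqxx mul1r big1 ?addr0 // => s'.
by rewrite eq_sym => /negbTE ->; rewrite mul0r.
Qed.

Definition vterm pi s t :=
  gamma ^+ t * \sum_s' sd pi (@Defs.dirac R S s) t s' * rpi pi s'.
Definition vps pi s n := \sum_(0 <= t < n) vterm pi s t.

Lemma V_def pi s : V pi s = limn (vps pi s).
Proof. by []. Qed.

Lemma dirac_ge0 s s' : 0 <= (@Defs.dirac R S s) s'.
Proof. by rewrite /Defs.dirac ler0n. Qed.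

Lemma vterm_ge0 pi s t : is_policy pi -> 0 <= vterm pi s t.
Proof.
move=> hp; apply: mulr_ge0; first by apply: exprn_ge0; case/andP: g01.
apply: sumr_ge0 => s' _; apply: mulr_ge0; last exact: rpi_ge0.
apply: sd_ge0 => //; exact: dirac_ge0.
Qed.

Lemma vterm_le pi s t : is_policy pi -> vterm pi s t <= gamma ^+ t.
Proof.
move=> hp; rewrite -[X in _ <= X]mulr1; apply: ler_wpM2l.
  by apply: exprn_ge0; case/andP: g01.
rewrite -(dirac_sum s) -(sd_sum (@Defs.dirac R S s) hp t); apply: ler_sum => s' _.
rewrite -[X in _ <= X]mulr1; apply: ler_wpM2l; last exact: rpi_le1.
apply: sd_ge0 => //; exact: dirac_ge0.
Qed.

Lemma vps_le pi s n : is_policy pi -> vps pi s n <= (1 - gamma)^-1.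
Proof.
move=> hp; apply: le_trans (geo_le n g01).
by apply: ler_sum => t _; exact: vterm_le.
Qed.

Lemma vps_to pi s : is_policy pi -> vps pi s @ \oo --> V pi s.
Proof.
move=> hp; exact: (ps_cvg (fun t => vterm_ge0 s t hp) (fun n => vps_le s n hp)).
Qed.

Lemma vterm_S pi s t :
  vterm pi s t.+1 = gamma * \sum_s1 kern pi s s1 * vterm pi s1 t.
Proof.
rewrite /vterm exprS -mulrA; congr (_ * _).
under [RHS]eq_bigr do rewrite mulrCA.
rewrite -mulr_sumr; congr (_ * _).
under [RHS]eq_bigr do rewrite mulr_sumr.
rewrite exchange_big /=; apply: eq_bigr => s' _.
have -> : (\sum_s0 sd pi (@Defs.dirac R S s) t s0 * \sum_a pi s0 a * P s0 a s')
  = sd pi (@Defs.dirac R S s) t.+1 s' by [].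
rewrite sd_shift sd_lin mulr_suml; apply: eq_bigr => s1 _.
by rewrite /= (dirac_dot (fun s0 => kern pi s0 s1)) mulrA.
Qed.

Lemma vps_S pi s n :
  vps pi s n.+1 = rpi pi s + gamma * \sum_s1 kern pi s s1 * vps pi s1 n.
Proof.
rewrite /vps big_nat_recl //; congr (_ + _).
  by rewrite /vterm expr0 mul1r /= dirac_dot.
under eq_bigr do rewrite vterm_S.
rewrite -mulr_sumr; congr (_ * _).
rewrite exchange_big /=; apply: eq_bigr => s1 _.
by rewrite mulr_sumr.
Qed.

Lemma bellman pi : is_policy pi ->
  forall s, V pi s = rpi pi s + gamma * \sum_s1 kern pi s s1 * V pi s1.
Proof.
move=> hp s.
have h1 : (fun n => vps pi s n.+1) @ \oo --> V pi s.
  have := @vps_to pi s hp; rewrite -cvg_shiftS; exact.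
have h2 : (fun n => vps pi s n.+1) @ \oo -->
           rpi pi s + gamma * \sum_s1 kern pi s s1 * V pi s1.
  under eq_fun do rewrite vps_S.
  apply: cvgD; first exact: cvg_cst.
  apply: cvgM; first exact: cvg_cst.
  apply: cvg_sumF => s1.
  apply: cvgM; first exact: cvg_cst.
  exact: vps_to.
by rewrite -(norm_cvg_lim h1) (norm_cvg_lim h2).
Qed.


Lemma sumQ pi pi' s :
  \sum_a pi' s a * Q pi s a = rpi pi' s + gamma * \sum_s1 kern pi' s s1 * V pi s1.
Proof.
rewrite /Qf; under eq_bigr do rewrite mulrDr.
rewrite big_split /=; congr (_ + _).
under eq_bigr do rewrite mulrCA mulr_sumr.
rewrite -mulr_sumr; congr (_ * _).
rewrite exchange_big /=; apply: eq_bigr => s1 _.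
by rewrite /kern mulr_suml; apply: eq_bigr => a _; rewrite mulrA.
Qed.

Lemma bellmanQ pi : is_policy pi -> forall s, V pi s = \sum_a pi s a * Q pi s a.
Proof. by move=> hp s; rewrite sumQ bellman. Qed.

Lemma g1pos : 0 < 1 - gamma.
Proof. by case/andP: g01 => _ g1; rewrite subr_gt0. Qed.

Lemma V_ge0 pi s : is_policy pi -> 0 <= V pi s.
Proof.
move=> hp.
have h := @max_principle R S (kern pi) (fun s => - V pi s) gamma 0 g01 (kern_ge0 hp) (kern_sum1 hp).
have : (1 - gamma) * - V pi s <= 0.
  apply: h => s1; rewrite (bellman hp s1) add0r opprD.
  under [X in _ <= _ * X]eq_bigr do rewrite mulrN.
  rewrite sumrN mulrN; have := @rpi_ge0 pi s1 hp; lra.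
rewrite mulrN oppr_le0 => h2.
by rewrite -(pmulr_rge0 _ g1pos).
Qed.

Lemma V_le pi s : is_policy pi -> V pi s <= (1 - gamma)^-1.
Proof.
move=> hp.
have h := @max_principle R S (kern pi) (V pi) gamma 1 g01 (kern_ge0 hp) (kern_sum1 hp).
have : (1 - gamma) * V pi s <= 1.
  apply: h => s1; rewrite (bellman hp s1) lerD2r; exact: rpi_le1.
by move=> h2; rewrite -(ler_pM2l g1pos) mulfV // gt_eqF // g1pos.
Qed.

Lemma Q_le pi s a : is_policy pi -> Q pi s a <= (1 - gamma)^-1.
Proof.
move=> hp; rewrite /Qf.
have h : \sum_s' P s a s' * V pi s' <= (1 - gamma)^-1.
  apply: (@le_trans _ _ (\sum_s' P s a s' * (1 - gamma)^-1)).
    apply: ler_sum => s' _; apply: ler_wpM2l; [exact: P0 | exact: V_le].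
  by rewrite -mulr_suml P1 mul1r.
have g0 : 0 <= gamma by case/andP: g01.
have h2 := ler_wpM2l g0 h.
have h3 : r s a <= 1 by case/andP: (r01 s a).
have e : (1 - gamma)^-1 = 1 + gamma * (1 - gamma)^-1.
  by field; rewrite gt_eqF // g1pos.
rewrite e; exact: lerD.
Qed.

Lemma U_le pi s a : is_policy pi -> Uf P r gamma pi s a <= (1 - gamma)^-1.
Proof.
move=> hp; rewrite /Uf lerBlDr; apply: le_trans (Q_le s a hp) _.
by rewrite lerDl; exact: V_ge0.
Qed.

Lemma sumU0 pi s : is_policy pi -> \sum_a pi s a * Uf P r gamma pi s a = 0.
Proof.
move=> hp; rewrite /Uf; under eq_bigr do rewrite mulrBr.
by rewrite sumrB -mulr_suml (proj2 (hp s)) mul1r -bellmanQ // subrr.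
Qed.

Lemma compare pi pi' : is_policy pi -> is_policy pi' -> forall s,
  V pi' s - V pi s = (\sum_a pi' s a * Q pi s a - V pi s)
     + gamma * \sum_s1 kern pi' s s1 * (V pi' s1 - V pi s1).
Proof.
move=> hp hp' s; rewrite sumQ (bellman hp' s).
under [X in _ = _ + gamma * X]eq_bigr do rewrite mulrBr.
rewrite sumrB; ring.
Qed.

Lemma improve pi pi' : is_policy pi -> is_policy pi' ->
  (forall s, 0 <= \sum_a pi' s a * Q pi s a - V pi s) ->
  forall s, \sum_a pi' s a * Q pi s a - V pi s <= V pi' s - V pi s.
Proof.
move=> hp hp' g0.
have W0 : forall s, 0 <= V pi' s - V pi s.
  have h := @max_principle R S (kern pi') (fun s => - (V pi' s - V pi s)) gamma 0 g01
     (kern_ge0 hp') (kern_sum1 hp').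
  move=> s; have : (1 - gamma) * - (V pi' s - V pi s) <= 0.
    apply: h => s1; rewrite (compare hp hp' s1) add0r opprD.
    under [X in _ <= gamma * X]eq_bigr do rewrite mulrN.
    rewrite sumrN mulrN; have := g0 s1; lra.
  rewrite mulrN oppr_le0 => h2.
  by rewrite -(pmulr_rge0 _ g1pos).
move=> s; rewrite [X in _ <= X](compare hp hp' s) lerDl.
apply: mulr_ge0; first by case/andP: g01.
apply: sumr_ge0 => s1 _; apply: mulr_ge0 => //; exact: kern_ge0.
Qed.

Definition gimp pi pi' s := \sum_a pi' s a * Q pi s a - V pi s.

Lemma improve_rho rho pi pi' s0 : (forall s, 0 <= rho s) -> \sum_s rho s = 1 ->
  is_policy pi -> is_policy pi' -> (forall s, 0 <= gimp pi pi' s) ->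
  dvisit P gamma rho pi' s0 * gimp pi pi' s0 <=
  (1 - gamma) * (Vrho P r gamma rho pi' - Vrho P r gamma rho pi).
Proof.
move=> rho0 rho1 hp hp' g0.
have g0' : 0 <= gamma by case/andP: g01.
pose W := fun s => V pi' s - V pi s.
have Weq : forall s, W s = gimp pi pi' s + gamma * \sum_s1 kern pi' s s1 * W s1.
  by move=> s; rewrite /W (compare hp hp').
have W0 : forall s, 0 <= W s.
  by move=> s; apply: le_trans (g0 s) _; exact: improve.
pose mu := sd pi' rho.
have mu0 : forall t s, 0 <= mu t s by move=> t s; exact: sd_ge0.
have ident : forall n, \sum_s rho s * W s =
    \sum_(0 <= t < n) gamma ^+ t * \sum_s mu t s * gimp pi pi' s
    + gamma ^+ n * \sum_s mu n s * W s.
  elim => [|n IH]; first by rewrite big_geq // add0r expr0 mul1r.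
  rewrite IH big_nat_recr //= -addrA; congr (_ + _).
  have -> : \sum_s mu n s * W s = \sum_s mu n s * gimp pi pi' s
       + gamma * \sum_s mu n.+1 s * W s.
    under eq_bigr do rewrite Weq mulrDr.
    rewrite big_split /=; congr (_ + _).
    under eq_bigr do rewrite mulrCA.
    rewrite -mulr_sumr; congr (_ * _).
    rewrite (eq_bigr (fun i => \sum_s1 mu n i * (kern pi' i s1 * W s1))); last first.
      by move=> i _; rewrite mulr_sumr.
    rewrite exchange_big /=; apply: eq_bigr => s1 _.
    rewrite /mu /= mulr_suml; apply: eq_bigr => s _.
    by rewrite /kern mulrA.
  rewrite exprSr; ring.
pose D n := \sum_(0 <= t < n) gamma ^+ t * mu t s0.
have Dle : forall n, D n * gimp pi pi' s0 <= \sum_s rho s * W s.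
  move=> n; rewrite (ident n) /D mulr_suml -[X in X <= _]addr0; apply: lerD.
    apply: ler_sum => t _; rewrite -mulrA; apply: ler_wpM2l; first exact: exprn_ge0.
    rewrite (bigD1 s0) //= lerDl; apply: sumr_ge0 => s _; apply: mulr_ge0 => //.
  apply: mulr_ge0; first exact: exprn_ge0.
  by apply: sumr_ge0 => s _; apply: mulr_ge0.
have Dcvg : cvgn D.
  apply: (@ps_cvg _ _ (1 - gamma)^-1).
    by move=> t; apply: mulr_ge0 => //; exact: exprn_ge0.
  move=> n; apply: le_trans (geo_le n g01); apply: ler_sum => t _.
  rewrite -[X in _ <= X]mulr1; apply: ler_wpM2l; first exact: exprn_ge0.
  rewrite -rho1 -(sd_sum rho hp' t) (bigD1 s0) //= lerDl.
  by apply: sumr_ge0 => s _.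
have -> : dvisit P gamma rho pi' s0 = (1 - gamma) * limn D by [].
have -> : Vrho P r gamma rho pi' - Vrho P r gamma rho pi = \sum_s rho s * W s.
  by rewrite /Vrho -sumrB; apply: eq_bigr => s _; rewrite mulrBr.
rewrite -mulrA; apply: ler_wpM2l; first exact: ltW g1pos.
have h : (fun n => D n * gimp pi pi' s0) @ \oo --> limn D * gimp pi pi' s0.
  by apply: cvgM; [exact: Dcvg | exact: cvg_cst].
rewrite -(norm_cvg_lim h); apply: limr_le; first exact: cvgP h.
by apply: nearW => n; exact: Dle.
Qed.

Definition sw (pi : policy R S A) s0 a0 : policy R S A :=
  fun s a => if s == s0 then (a == a0)%:R else pi s a.

Lemma sw_pol pi s0 a0 : is_policy pi -> is_policy (sw pi s0 a0).
Proof.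
move=> hp s; rewrite /sw; case: eqP => _; last exact: hp.
split; first by move=> a; exact: ler0n.
by rewrite (bigD1 a0) //= eqxx big1 ?addr0 // => a /negbTE ->.
Qed.

Lemma gimp_sw pi s0 a0 s : is_policy pi ->
  gimp pi (sw pi s0 a0) s = if s == s0 then Q pi s0 a0 - V pi s0 else 0.
Proof.
move=> hp; rewrite /gimp /sw; case: eqP => [->|_].
  rewrite (bigD1 a0) //= eqxx mul1r big1 ?addr0 // => a /negbTE ->.
  by rewrite mul0r.
by rewrite -bellmanQ // subrr.
Qed.

Section Gap.
Variable pistar : policy R S A.
Hypothesis hopt : optimal P r gamma pistar.
Hypothesis huniq : forall pi, optimal P r gamma pi -> forall s a, pi s a = pistar s a.

Lemma Qstar_le s a : Q pistar s a <= V pistar s.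
Proof.
have hps := hopt.1.
rewrite leNgt; apply/negP => hlt.
have hp' := sw_pol s a hps.
have g0 : forall s1, 0 <= gimp pistar (sw pistar s a) s1.
  move=> s1; rewrite gimp_sw //; case: ifP => // _; rewrite subr_ge0; exact: ltW.
have h' : gimp pistar (sw pistar s a) s <= V (sw pistar s a) s - V pistar s.
  exact: improve hps hp' g0 s.
rewrite gimp_sw // eqxx in h'.
have := hopt.2 _ hp' s; lra.
Qed.

Lemma Qstar_det s a : Q pistar s a = V pistar s -> forall b, pistar s b = (b == a)%:R.
Proof.
move=> heq b.
have hps := hopt.1.
have hp' := sw_pol s a hps.
have g0 : forall s1, 0 <= gimp pistar (sw pistar s a) s1.
  by move=> s1; rewrite gimp_sw //; case: ifP => // _; rewrite heq subrr.
have hopt' : optimal P r gamma (sw pistar s a).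
  split => // pi hp s1.
  apply: le_trans (hopt.2 _ hp s1) _.
  have := le_trans (g0 s1) (improve hps hp' g0 s1); lra.
by rewrite -(huniq hopt' s b) /sw eqxx.
Qed.

Lemma astar_ex s : exists a, forall b, b != a -> Q pistar s b < V pistar s.
Proof.
have hps := hopt.1.
have [a ha] : exists a, Q pistar s a = V pistar s.
  have hsum : \sum_a pistar s a * (V pistar s - Q pistar s a) = 0.
    under eq_bigr do rewrite mulrBr.
    by rewrite sumrB -mulr_suml (proj2 (hps s)) mul1r -bellmanQ // subrr.
  have hnn : forall a, 0 <= pistar s a * (V pistar s - Q pistar s a).
    move=> a; apply: mulr_ge0; first by case: (hps s).
    by rewrite subr_ge0; exact: Qstar_le.
  have hz := psumr_eq0P (fun a _ => hnn a) hsum.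
  have [a pa] : exists a, pistar s a != 0.
    case: (pickP (fun a => pistar s a != 0)) => [a pa|hall]; first by exists a.
    exfalso.
    have : \sum_a pistar s a = 0.
      by apply: big1 => a _; have := hall a; move/negbFE/eqP.
    by rewrite (proj2 (hps s)) => /eqP; rewrite oner_eq0.
  exists a; have := hz a isT; move/eqP; rewrite mulf_eq0 (negbTE pa) /= subr_eq0.
  by move/eqP.
exists a => b hb; rewrite lt_neqAle Qstar_le andbT; apply/negP => /eqP hbeq.
have h1 := Qstar_det hbeq a.
have h2 := Qstar_det ha a.
rewrite h2 eqxx eq_sym (negbTE hb) in h1.
by move/eqP: h1; rewrite eqr_nat.
Qed.

End Gap.

Section EG.
Variable eta : R.
Hypothesis eta_pos : 0 < eta.

Definition xx pi s b := Num.max (Uf P r gamma pi s b) 0.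
Definition ee pi s b := expR (eta * xx pi s b).
Definition Zs pi s := \sum_b pi s b * ee pi s b.
Definition hs pi s := \sum_b pi s b * ((ee pi s b - 1) * xx pi s b).
Local Notation step := (eg_step P r gamma eta).

Lemma expR_ge1 (x : R) : 0 <= x -> 1 <= expR x.
Proof. by move=> x0; apply: le_trans (expR_ge1Dx x); rewrite lerDl. Qed.

Lemma xx_ge0 pi s b : 0 <= xx pi s b.
Proof. by rewrite /xx le_max lexx orbT. Qed.

Lemma xx_ge pi s b : Uf P r gamma pi s b <= xx pi s b.
Proof. by rewrite /xx le_max lexx. Qed.

Lemma ee_ge1 pi s b : 1 <= ee pi s b.
Proof. apply: expR_ge1; apply: mulr_ge0; [exact: ltW | exact: xx_ge0]. Qed.

Lemma Z_ge1 pi s : is_policy pi -> 1 <= Zs pi s.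
Proof.
move=> hp; rewrite -(proj2 (hp s)); apply: ler_sum => b _.
rewrite -[X in X <= _]mulr1; apply: ler_wpM2l; first by case: (hp s).
exact: ee_ge1.
Qed.

Lemma Z_gt0 pi s : is_policy pi -> 0 < Zs pi s.
Proof. by move=> hp; apply: lt_le_trans (Z_ge1 s hp). Qed.

Lemma Z_le pi s m : is_policy pi -> (forall b, xx pi s b <= m) -> Zs pi s <= expR (eta * m).
Proof.
move=> hp hm; rewrite -[X in _ <= X]mul1r -(proj2 (hp s)) mulr_suml.
apply: ler_sum => b _; apply: ler_wpM2l; first by case: (hp s).
by rewrite /ee ler_expR ler_pM2l.
Qed.

Lemma stepE pi s a : step pi s a = pi s a * ee pi s a / Zs pi s.
Proof. by []. Qed.

Lemma step_policy pi : is_policy pi -> is_policy (step pi).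
Proof.
move=> hp s; split.
  move=> a; rewrite stepE; apply: divr_ge0; last exact: ltW (Z_gt0 s hp).
  by apply: mulr_ge0; [case: (hp s) | exact: expR_ge0].
rewrite /= -mulr_suml mulfV //.
have := Z_gt0 s hp; rewrite /Zs /ee /xx => h; exact: lt0r_neq0 h.
Qed.

Lemma step_fs pi : full_support pi -> full_support (step pi).
Proof.
move=> [hp hpos]; split; first exact: step_policy.
move=> s a; rewrite stepE; apply: divr_gt0; last exact: Z_gt0.
by apply: mulr_gt0 => //; exact: expR_gt0.
Qed.

Lemma softmax_fs (theta : S -> A -> R) (a0 : A) : full_support (softmax theta).
Proof.
have hZ : forall s, 0 < \sum_a' expR (theta s a').
  move=> s; rewrite (bigD1 a0) //=; apply: lt_le_trans (expR_gt0 (theta s a0)) _.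
  by rewrite lerDl; apply: sumr_ge0 => a _; exact: expR_ge0.
have hpos : forall s a, 0 < softmax theta s a.
  by move=> s a; rewrite /softmax; apply: divr_gt0 => //; exact: expR_gt0.
split => // s; split; first by move=> a; exact: ltW.
rewrite /softmax -mulr_suml mulfV //; exact: lt0r_neq0.
Qed.

Lemma hs_ge0 pi s : is_policy pi -> 0 <= hs pi s.
Proof.
move=> hp; apply: sumr_ge0 => b _; apply: mulr_ge0; first by case: (hp s).
apply: mulr_ge0; last exact: xx_ge0.
by rewrite subr_ge0; exact: ee_ge1.
Qed.

Lemma gimp_formula pi s : is_policy pi -> gimp pi (step pi) s = hs pi s / Zs pi s.
Proof.
move=> hp.
have key : forall b, (ee pi s b - 1) * Uf P r gamma pi s b = (ee pi s b - 1) * xx pi s b.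
  move=> b; rewrite /ee /xx maxEle; case: ifP => // _.
  by rewrite mulr0 expR0 subrr !mul0r.
have hs1 : \sum_a step pi s a = 1 by case: (step_policy hp s).
rewrite /gimp.
transitivity (\sum_a step pi s a * Uf P r gamma pi s a).
  rewrite /Uf; under [RHS]eq_bigr do rewrite mulrBr.
  by rewrite sumrB -mulr_suml hs1 mul1r.
under eq_bigr do rewrite stepE mulrAC.
rewrite -mulr_suml; congr (_ / _).
rewrite /hs (eq_bigr (fun b => pi s b * ((ee pi s b - 1) * xx pi s b) + pi s b * Uf P r gamma pi s b)).
  by rewrite big_split /= sumU0 // addr0.
by move=> b _; rewrite -key; ring.
Qed.

Definition Zm := expR (eta * (1 - gamma)^-1).

Lemma Z_le_Zm pi s : is_policy pi -> Zs pi s <= Zm.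
Proof.
move=> hp; apply: Z_le => // b; rewrite /xx ge_max; apply/andP; split.
  exact: U_le.
by rewrite invr_ge0 ltW // g1pos.
Qed.

Lemma Zm_gt0 : 0 < Zm.
Proof. exact: expR_gt0. Qed.

Lemma gimp_ge0 pi s : is_policy pi -> 0 <= gimp pi (step pi) s.
Proof.
move=> hp; rewrite gimp_formula //; apply: divr_ge0; first exact: hs_ge0.
exact: ltW (Z_gt0 s hp).
Qed.

Lemma hs_Zm pi s : is_policy pi -> hs pi s / Zm <= gimp pi (step pi) s.
Proof.
move=> hp; rewrite gimp_formula //; apply: ler_wpM2l; first exact: hs_ge0.
rewrite lef_pV2 ?posrE ?Zm_gt0 ?Z_gt0 //; exact: Z_le_Zm.
Qed.

Lemma dV_ge pi s : is_policy pi -> hs pi s / Zm <= V (step pi) s - V pi s.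
Proof.
move=> hp; apply: le_trans (hs_Zm s hp) _.
apply: improve => //; first exact: step_policy.
by move=> s1; exact: gimp_ge0.
Qed.

Lemma Z_bound pi s c : is_policy pi -> 0 < c ->
  Zs pi s - 1 <= (expR (eta * c) - 1) + c^-1 * hs pi s.
Proof.
move=> hp c0.
have E : Zs pi s - 1 = \sum_b pi s b * (ee pi s b - 1).
  by under eq_bigr do rewrite mulrBr mulr1; rewrite sumrB (proj2 (hp s)).
have E2 : expR (eta * c) - 1 = \sum_b pi s b * (expR (eta * c) - 1).
  by rewrite -mulr_suml (proj2 (hp s)) mul1r.
rewrite E E2 /hs mulr_sumr -big_split /=; apply: ler_sum => b _.
have pb : 0 <= pi s b by case: (hp s).
have e1 := ee_ge1 pi s b.
have x0 := xx_ge0 pi s b.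
have ec1 : 1 <= expR (eta * c) by apply: expR_ge1; apply: mulr_ge0; apply: ltW.
rewrite mulrCA -mulrDr; apply: ler_wpM2l => //.
have [hx|hx] := leP (xx pi s b) c.
  have : ee pi s b <= expR (eta * c) by rewrite /ee ler_expR ler_pM2l.
  have : 0 <= c^-1 * ((ee pi s b - 1) * xx pi s b).
    apply: mulr_ge0; first by rewrite invr_ge0 ltW.
    by apply: mulr_ge0 => //; rewrite subr_ge0.
  lra.
have h1 : 1 <= c^-1 * xx pi s b.
  by rewrite ler_pdivlMl // mulr1 ltW.
have : (ee pi s b - 1) * 1 <= (ee pi s b - 1) * (c^-1 * xx pi s b).
  by apply: ler_wpM2l => //; rewrite subr_ge0.
have e : c^-1 * ((ee pi s b - 1) * xx pi s b) = (ee pi s b - 1) * (c^-1 * xx pi s b).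
  by ring.
rewrite e; lra.
Qed.

Lemma hs_single pi s a eps : is_policy pi -> 0 <= eps -> eps <= xx pi s a ->
  pi s a * ((expR (eta * eps) - 1) * eps) <= hs pi s.
Proof.
move=> hp e0 ex.
have pb : forall b, 0 <= pi s b by case: (hp s).
rewrite /hs (bigD1 a) //= -[X in X <= _]addr0; apply: lerD.
  apply: ler_wpM2l => //; apply: ler_pM => //.
  - by rewrite subr_ge0; apply: expR_ge1; apply: mulr_ge0 => //; apply: ltW.
  - by rewrite lerD2r /ee ler_expR ler_pM2l.
apply: sumr_ge0 => b _; apply: mulr_ge0 => //; apply: mulr_ge0; last exact: xx_ge0.
by rewrite subr_ge0; exact: ee_ge1.
Qed.

Lemma sumQW (W : S -> R) pi' s :
  \sum_a pi' s a * (r s a + gamma * \sum_s' P s a s' * W s') =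
  rpi pi' s + gamma * \sum_s1 kern pi' s s1 * W s1.
Proof.
under eq_bigr do rewrite mulrDr.
rewrite big_split /=; congr (_ + _).
under eq_bigr do rewrite mulrCA mulr_sumr.
rewrite -mulr_sumr; congr (_ * _).
rewrite exchange_big /=; apply: eq_bigr => s1 _.
by rewrite /kern mulr_suml; apply: eq_bigr => a _; rewrite mulrA.
Qed.

Section Traj.
Variables (pistar pi0 : policy R S A).
Hypothesis hopt : optimal P r gamma pistar.
Hypothesis fs0 : full_support pi0.
Local Notation pit t := (eg_iter P r gamma eta pi0 t).

Lemma pit_fs t : full_support (pit t).
Proof. elim: t => [|t IH] //; exact: step_fs IH. Qed.

Lemma pit_pol t : is_policy (pit t).
Proof. exact: (pit_fs t).1. Qed.

Lemma pit_S t : pit t.+1 = step (pit t).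
Proof. by []. Qed.

Lemma Vmono s : {homo (fun t => V (pit t) s) : n m / (n <= m)%N >-> n <= m}.
Proof.
apply/nondecreasing_seqP => t /=.
have h := dV_ge s (pit_pol t).
have h0 : 0 <= hs (pit t) s / Zm.
  by apply: divr_ge0; [exact: hs_ge0 (pit_pol t) | exact: ltW Zm_gt0].
rewrite -subr_ge0; exact: le_trans h0 h.
Qed.

Lemma Vstar t s : V (pit t) s <= V pistar s.
Proof. exact: hopt.2 _ (pit_pol t) s. Qed.

Lemma Vt_cvg s : cvgn (fun t => V (pit t) s).
Proof.
apply: cvgP; apply: (nondecreasing_cvgn (@Vmono s)).
by exists (V pistar s) => _ [t _ <-]; exact: Vstar.
Qed.

Definition Vi s := limn (fun t => V (pit t) s).

Lemma Vt_le_Vi t s : V (pit t) s <= Vi s.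
Proof. have := nondecreasing_cvgn_le (@Vmono s) (@Vt_cvg s) t. exact. Qed.

Lemma Vi_le s : Vi s <= V pistar s.
Proof. apply: limr_le; first exact: Vt_cvg. by apply: nearW => t; exact: Vstar. Qed.

Definition Qi s a := r s a + gamma * \sum_s' P s a s' * Vi s'.

Lemma Qt_cvg s a : (fun t => Q (pit t) s a) @ \oo --> Qi s a.
Proof.
rewrite /Qf /Qi; apply: cvgD; first exact: cvg_cst.
apply: cvgM; first exact: cvg_cst.
apply: cvg_sumF => s1; apply: cvgM; first exact: cvg_cst.
exact: Vt_cvg.
Qed.

Lemma Ut_cvg s a : (fun t => Uf P r gamma (pit t) s a) @ \oo --> Qi s a - Vi s.
Proof. rewrite /Uf; apply: cvgB; [exact: Qt_cvg | exact: Vt_cvg]. Qed.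

Lemma dV_cvg s : (fun t => V (pit t.+1) s - V (pit t) s) @ \oo --> 0.
Proof.
have h1 : (fun t => V (pit t.+1) s) @ \oo --> Vi s.
  have := @Vt_cvg s; rewrite -(cvg_shiftS (fun t => V (pit t) s)); exact.
rewrite -(subrr (Vi s)); apply: cvgB => //; exact: Vt_cvg.
Qed.


Lemma near_ex (Pr : nat -> Prop) : (\forall t \near \oo, Pr t) ->
  exists N, forall t, (N <= t)%N -> Pr t.
Proof. by move=> [N _ HN]; exists N => t Ht; exact: HN. Qed.

Lemma Ui_le0 s a : Qi s a - Vi s <= 0.
Proof.
rewrite leNgt; apply/negP => hpos.
set u := Qi s a - Vi s in hpos.
pose eps := u / 2.
have eps0 : 0 < eps by rewrite /eps divr_gt0.
have epsu : eps < u by rewrite /eps; lra.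
have [N1 H1] := near_ex (cvgr_gt _ (@Ut_cvg s a) _ epsu).
pose c1 := expR (eta * eps).
pose c2 := expR (eta * (eps / 2)).
have c21 : c2 < c1.
  by rewrite /c1 /c2 ltr_expR ltr_pM2l //; lra.
have c11 : 1 < c1 by rewrite /c1 expR_gt1 mulr_gt0.
pose th := (c1 - c2) * (eps / 2) / Zm.
have th0 : 0 < th.
  rewrite /th; apply: divr_gt0; last exact: Zm_gt0.
  by apply: mulr_gt0; lra.
have [N2 H2] := near_ex (cvgr_lt _ (@dV_cvg s) _ th0).
pose N := maxn N1 N2.
have step_up : forall t, (N <= t)%N -> pit t s a <= pit t.+1 s a.
  move=> t Nt.
  have u1 : eps < Uf P r gamma (pit t) s a.
    by apply: H1; apply: leq_trans Nt; exact: leq_maxl.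
  have d1 : V (pit t.+1) s - V (pit t) s < th.
    by have := H2 t (leq_trans (leq_maxr _ _) Nt).
  have hp := pit_pol t.
  have Zb := @Z_bound (pit t) s (eps / 2) hp (ltac:(lra)).
  have hsb := dV_ge s hp.
  have hs1 : hs (pit t) s <= (c1 - c2) * (eps / 2).
    have : hs (pit t) s / Zm <= (c1 - c2) * (eps / 2) / Zm.
      apply: le_trans hsb _; apply: ltW; exact: d1.
    by rewrite ler_pM2r // invr_gt0 Zm_gt0.
  have hs2 : (eps / 2)^-1 * hs (pit t) s <= c1 - c2.
    have e2 : 0 < eps / 2 by lra.
    have -> : c1 - c2 = (eps / 2)^-1 * ((c1 - c2) * (eps / 2)).
      by field; rewrite gt_eqF.
    by apply: ler_wpM2l => //; rewrite invr_ge0 ltW.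
  have Zc1 : Zs (pit t) s <= c1 by move: Zb; rewrite -/c2; lra.
  have ec : c1 <= ee (pit t) s a.
    rewrite /c1 /ee ler_expR ler_pM2l //.
    exact: le_trans (ltW u1) (xx_ge _ _ _).
  have pa : 0 <= pit t s a by case: (hp s).
  have Z0 := Z_gt0 s hp.
  rewrite pit_S stepE ler_pdivlMr //.
  apply: ler_wpM2l => //; exact: le_trans Zc1 ec.
have mono : forall n, pit N s a <= pit (N + n) s a.
  elim => [|n IH]; first by rewrite addn0.
  by rewrite addnS; apply: le_trans IH (step_up _ (leq_addr n N)).
pose q := pit N s a.
have q0 : 0 < q by exact: (pit_fs N).2 s a.
pose K := q * ((c1 - 1) * eps) / Zm.
have K0 : 0 < K.
  rewrite /K; apply: divr_gt0; last exact: Zm_gt0.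
  by apply: mulr_gt0 => //; apply: mulr_gt0 => //; lra.
have [N3 H3] := near_ex (cvgr_lt _ (@dV_cvg s) _ K0).
pose t := (N + N3)%N.
have hp := pit_pol t.
have A1 : q * ((c1 - 1) * eps) <= pit t s a * ((c1 - 1) * eps).
  apply: ler_wpM2r; first by apply: mulr_ge0; lra.
  exact: mono.
have u1 : eps < Uf P r gamma (pit t) s a.
  apply: H1; apply: leq_trans (leq_maxl N1 N2) _; exact: leq_addr.
have A2 : pit t s a * ((c1 - 1) * eps) <= hs (pit t) s.
  apply: hs_single => //; first exact: ltW.
  exact: le_trans (ltW u1) (xx_ge _ _ _).
have A3 : hs (pit t) s / Zm < K.
  apply: le_lt_trans (dV_ge s hp) _.
  by have := H3 t (leq_addl _ _).
have A4 : hs (pit t) s < q * ((c1 - 1) * eps).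
  by move: A3; rewrite /K ltr_pM2r // invr_gt0 Zm_gt0.
have := le_lt_trans (le_trans A1 A2) A4.
by rewrite ltxx.
Qed.

Lemma Vi_ge s : V pistar s <= Vi s.
Proof.
have hps := hopt.1.
have h := @max_principle R S (kern pistar) (fun s => V pistar s - Vi s) gamma 0 g01
  (kern_ge0 hps) (kern_sum1 hps).
have : (1 - gamma) * (V pistar s - Vi s) <= 0.
  apply: h => s1; rewrite add0r (bellman hps s1).
  have e1 := sumQW Vi pistar s1.
  have e2 : \sum_a pistar s1 a * (r s1 a + gamma * \sum_s' P s1 a s' * Vi s') <= Vi s1.
    apply: (@le_trans _ _ (\sum_a pistar s1 a * Vi s1)).
      apply: ler_sum => a _; apply: ler_wpM2l; first by case: (hps s1).
      by have := Ui_le0 s1 a; rewrite /Qi; lra.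
    by rewrite -mulr_suml (proj2 (hps s1)) mul1r.
  under [X in _ <= gamma * X]eq_bigr do rewrite mulrBr.
  rewrite sumrB; lra.
by rewrite pmulr_rle0 ?g1pos // subr_le0.
Qed.

Lemma Vi_eq s : Vi s = V pistar s.
Proof. by apply: le_anti; rewrite Vi_le Vi_ge. Qed.

Lemma Vt_star s : (fun t => V (pit t) s) @ \oo --> V pistar s.
Proof. rewrite -Vi_eq; exact: Vt_cvg. Qed.

Lemma Ut_star s a : (fun t => Uf P r gamma (pit t) s a) @ \oo --> Q pistar s a - V pistar s.
Proof.
have -> : Q pistar s a = Qi s a.
  by rewrite /Qi /Qf; congr (_ + _ * _); apply: eq_bigr => s1 _; rewrite Vi_eq.
rewrite -Vi_eq; exact: Ut_cvg.
Qed.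

Lemma rate (rho : S -> R) : (forall s, 0 <= rho s) -> \sum_s rho s = 1 ->
  (forall pi, optimal P r gamma pi -> forall s a, pi s a = pistar s a) ->
  forall dmin, 0 < dmin ->
  (forall pi, full_support pi -> forall s, dmin <= dvisit P gamma rho pi s) ->
  exists C, forall t, (0 < t)%N ->
    Vrho P r gamma rho pistar - Vrho P r gamma rho (pit t) <= C / t%:R.
Proof.
move=> rho0 rho1 huniq dmin dmin0 hdmin.
have hps := hopt.1.
have [astar Ha] := fin_all_exists (astar_ex hopt huniq).
have ev : \forall t \near \oo, forall i : S * A,
    i.2 != astar i.1 -> Uf P r gamma (pit t) i.1 i.2 < 0.
  apply: filter_forall => -[s b] /=.
  case: (eqVneq b (astar s)) => [_|hb]; first by apply: nearW.
  have hlt : Q pistar s b - V pistar s < 0 by rewrite subr_lt0; exact: Ha.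
  by apply: filterS (cvgr_lt _ (@Ut_star s b) _ hlt) => t h _.
have [T HT] := near_ex ev.
have xx0 : forall t, (T <= t)%N -> forall s b, b != astar s -> xx (pit t) s b = 0.
  move=> t Tt s b hb; rewrite /xx maxEle.
  by have := HT t Tt (s, b) hb => /= h; rewrite (ltW h).
have upa : forall t, (T <= t)%N -> forall s, pit t s (astar s) <= pit t.+1 s (astar s).
  move=> t Tt s; have hp := pit_pol t.
  have Zl : Zs (pit t) s <= ee (pit t) s (astar s).
    apply: Z_le => // b; case: (eqVneq b (astar s)) => [->|hb]; first exact: lexx.
    by rewrite xx0 // xx_ge0.
  have pa : 0 <= pit t s (astar s) by case: (hp s).
  rewrite pit_S stepE ler_pdivlMr ?Z_gt0 //.
  exact: ler_wpM2l.
have [p [p0 hpT]] := fin_pos_min (fun s => (pit_fs T).2 s (astar s)).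
have pge : forall n s, p <= pit (T + n)%N s (astar s).
  elim => [|n IH] s; first by rewrite addn0; exact: hpT.
  by rewrite addnS; apply: le_trans (IH s) (upa _ (leq_addr n T) s).
pose d t := Vrho P r gamma rho pistar - Vrho P r gamma rho (pit t).
have d_eq : forall t, d t = \sum_s rho s * (V pistar s - V (pit t) s).
  by move=> t; rewrite /d /Vrho -sumrB; apply: eq_bigr => s _; rewrite mulrBr.
have d0 : forall t, 0 <= d t.
  move=> t; rewrite d_eq; apply: sumr_ge0 => s _; apply: mulr_ge0 => //.
  by rewrite subr_ge0; exact: Vstar.
have dB : forall t, d t <= (1 - gamma)^-1.
  move=> t; rewrite d_eq; apply: (@le_trans _ _ (\sum_s rho s * (1 - gamma)^-1)).
    apply: ler_sum => s _; apply: ler_wpM2l => //.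
    have := V_le s hps; have := V_ge0 s (pit_pol t); lra.
  by rewrite -mulr_suml rho1 mul1r.
have [s00 _] : exists s : S, True.
  case: (pickP (@predT S)) => [s _|h]; first by exists s.
  exfalso; have : \sum_s rho s = 0 by apply: big1 => s _; have := h s.
  by rewrite rho1 => /eqP; rewrite oner_eq0.
have g1 := g1pos.
pose q := dmin * p * eta / Zm.
have q0 : 0 < q.
  rewrite /q; apply: divr_gt0; last exact: Zm_gt0.
  by apply: mulr_gt0 => //; apply: mulr_gt0.
apply: (@rec_rate _ d (q * (1 - gamma)) (1 - gamma)^-1 T) => //.
  exact: mulr_gt0.
move=> t Tt.
have hp := pit_pol t.
have hp1 := pit_pol t.+1.
pose M := fun i : S * A => xx (pit t) i.1 i.2.
have [[s0 b0] HM] := fin_argmax M (s00, astar s00).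
pose m := xx (pit t) s0 b0.
have m0 : 0 <= m by exact: xx_ge0.
have hi : (1 - gamma) * d t <= m.
  have hD : forall s, (1 - gamma) * (V pistar s - V (pit t) s) <= m.
    apply: (max_principle g01 (kern_ge0 hps) (kern_sum1 hps)) => s.
    rewrite (bellman hps s).
    have e1 := sumQ (pit t) pistar s.
    have e2 : \sum_a pistar s a * Q (pit t) s a - V (pit t) s <= m.
      apply: (@le_trans _ _ (\sum_a pistar s a * m)); last first.
        by rewrite -mulr_suml (proj2 (hps s)) mul1r.
      have -> : \sum_a pistar s a * Q (pit t) s a - V (pit t) s =
                \sum_a pistar s a * Uf P r gamma (pit t) s a.
        rewrite /Uf; under [RHS]eq_bigr do rewrite mulrBr.
        by rewrite sumrB -mulr_suml (proj2 (hps s)) mul1r.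
      apply: ler_sum => a _; apply: ler_wpM2l; first by case: (hps s).
      apply: le_trans (xx_ge _ _ _) _; exact: (HM (s, a)).
    under [X in _ <= _ + gamma * X]eq_bigr do rewrite mulrBr.
    rewrite sumrB; lra.
  rewrite d_eq mulr_sumr; apply: (@le_trans _ _ (\sum_s rho s * m)); last first.
    by rewrite -mulr_suml rho1 mul1r.
  by apply: ler_sum => s _; rewrite mulrCA; apply: ler_wpM2l => //; exact: hD.
have g0 := gimp_ge0 s0 hp.
have hii : dmin * gimp (pit t) (pit t.+1) s0 <= (1 - gamma) * (d t - d t.+1).
  have h := improve_rho s0 rho0 rho1 hp hp1 (fun s => gimp_ge0 s hp).
  have dv := hdmin _ (pit_fs t.+1) s0.
  have -> : d t - d t.+1 = Vrho P r gamma rho (pit t.+1) - Vrho P r gamma rho (pit t).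
    by rewrite /d; ring.
  apply: le_trans h; exact: ler_wpM2r.
have hiii : p * (eta * m ^+ 2) <= hs (pit t) s0.
  case: (eqVneq b0 (astar s0)) => [eb|nb]; last first.
    have -> : m = 0 by rewrite /m xx0.
    by rewrite expr0n /= mulr0 mulr0; exact: hs_ge0.
  have hs1 := @hs_single (pit t) s0 b0 m hp m0 (lexx _).
  apply: le_trans hs1.
  have pb : p <= pit t s0 b0.
    by rewrite eb; have := pge (t - T)%N s0; rewrite subnKC.
  apply: ler_pM; [exact: ltW | apply: mulr_ge0; [exact: ltW | exact: sqr_ge0] | exact: pb | ].
  have := expR_ge1Dx (eta * m) => he.
  rewrite expr2 mulrA; apply: ler_wpM2r => //; lra.
have hiv : gimp (pit t) (pit t.+1) s0 >= p * (eta * m ^+ 2) / Zm.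
  apply: le_trans (hs_Zm s0 hp); apply: ler_wpM2r => //.
  by rewrite invr_ge0 ltW // Zm_gt0.
have hsq : ((1 - gamma) * d t) ^+ 2 <= m ^+ 2.
  rewrite !expr2; apply: ler_pM => //; apply: mulr_ge0 => //; exact: ltW.
have h5 : q * ((1 - gamma) * d t) ^+ 2 <= (1 - gamma) * (d t - d t.+1).
  apply: le_trans (ler_wpM2l (ltW q0) hsq) _.
  have -> : q * m ^+ 2 = dmin * (p * (eta * m ^+ 2) / Zm) by rewrite /q; ring.
  apply: le_trans hii; apply: ler_wpM2l; [exact: ltW | exact: hiv].
have e6 : q * ((1 - gamma) * d t) ^+ 2 = (1 - gamma) * (q * (1 - gamma) * d t ^+ 2).
  by ring.
rewrite e6 ler_pM2l // in h5; lra.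
Qed.
End Traj.
End EG.
End MDP.

Unset Implicit Arguments.
Local Close Scope classical_set_scope.

Theorem corollary2 (R : realType) (S A : finType)
    (P : S -> A -> S -> R) (r : S -> A -> R) (gamma : R) (rho : S -> R)
    (pistar : policy R S A) :
  (forall s a s', 0 <= P s a s') ->
  (forall s a, \sum_s' P s a s' = 1) ->
  (forall s a, 0 <= r s a <= 1) ->
  0 <= gamma < 1 ->
  (forall s, 0 <= rho s) -> \sum_s rho s = 1 ->
  optimal P r gamma pistar ->
  (forall pi, optimal P r gamma pi -> forall s a, pi s a = pistar s a) ->
  (exists dmin : R, 0 < dmin /\
     forall pi, full_support pi -> forall s, dmin <= dvisit P gamma rho pi s) ->
  forall theta0 : S -> A -> R,
  exists eta0 : R, 0 < eta0 /\
    forall eta : R, 0 < eta <= eta0 ->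
    exists C : R, forall t : nat, (0 < t)%N ->
      Vrho P r gamma rho pistar
        - Vrho P r gamma rho (eg_iter P r gamma eta (softmax theta0) t)
      <= C / t%:R.
Proof.
move=> P0 P1 r01 g01 rho0 rho1 hopt huniq [dmin [dmin0 hdmin]] theta0.
exists 1; split => // eta /andP[eta0 _].
case: (pickP (@predT A)) => [a0 _|hA].
  exact: (rate P0 P1 r01 g01 eta0 hopt (softmax_fs theta0 a0) rho0 rho1 huniq dmin0 hdmin).
exists 0 => t _.
have hS : forall s : S, False.
  move=> s; have h1 := proj2 (hopt.1 s).
  have h0 : \sum_a pistar s a = 0 by apply: big1 => a _; have := hA a.
  by rewrite h0 in h1; move/eqP: h1; rewrite eq_sym oner_eq0.
by rewrite /Vrho !big1 ?subrr ?mul0r // => s; case: (hS s).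
Qed.
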